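(* Let $R$ be a $*$-ring and $a\in R$. The following are equivalent: (1) There exist a projection $e$, a unit $u$ and an integer $m\geq1$ such that $a^m=eu$ and $a,e,u$ pairwise commute. (2) There exist a projection $f$ and a unit $v$ such that $a=f+v$, $fv=vf$ and $af$ is nilpotent. (3) There exists a projection $p$ with $ap=pa$ such that $ap$ is a unit of the corner ring $pRp$ and $a(1-p)$ is nilpotent. (4) There exists $b\in R$ with $ab=ba$ such that $(ab)^*=ab$, $b=bab$ and $a-a^2b$ is nilpotent.
   Context: A $*$-ring is a ring with identity with an involution $*$ ($(x+y)^*=x^*+y^*$, $(xy)^*=y^*x^*$, $(x^* )^*=x$). A projection is $p$ with $p^2=p=p^*$. *)

(* Defs.v *)
From HB Require Import structures.
From mathcomp Require Import all_boot all_algebra.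
Set Implicit Arguments. Unset Strict Implicit. Unset Printing Implicit Defensive.
Import GRing.Theory.
Local Open Scope ring_scope.

(* A *-ring: a ring with identity (possibly 0 = 1, hence pzRingType)
   together with an involution star. *)
Definition is_involution (R : pzRingType) (star : R -> R) : Prop :=
  [/\ forall x y : R, star (x + y) = star x + star y,
      forall x y : R, star (x * y) = star y * star x &
      forall x : R, star (star x) = x].

Definition is_projection (R : pzRingType) (star : R -> R) (p : R) : Prop :=
  p * p = p /\ star p = p.

Definition is_unit (R : pzRingType) (u : R) : Prop :=
  exists w : R, u * w = 1 /\ w * u = 1.

Definition is_nilpotent (R : pzRingType) (x : R) : Prop :=
  exists n : nat, x ^+ n = 0.

(* x is a unit of the corner ring pRp (whose identity is p):
   x lies in pRp and has an inverse in pRp. *)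
Definition corner_unit (R : pzRingType) (p x : R) : Prop :=
  x = p * x * p /\ exists y : R, y = p * y * p /\ x * y = p /\ y * x = p.

(* Main.v *)
Require Import Defs.
From mathcomp Require Import all_boot all_algebra.
Import GRing.Theory.
Local Open Scope ring_scope.

Lemma geo (R : pzRingType) (n : R) k : n ^+ k = 0 ->
  exists s, (1 - n) * s = 1 /\ s * (1 - n) = 1 /\
    forall z, z * n = n * z -> z * s = s * z.
Proof.
move=> nk; exists (\sum_(i < k) n ^+ i).
have cz : forall z, z * n = n * z -> z * (\sum_(i < k) n ^+ i) = (\sum_(i < k) n ^+ i) * z.
  by move=> z zn; apply: commr_sum => i _; apply: commrX.
have h : (1 - n) * (\sum_(i < k) n ^+ i) = 1.
  by rewrite -opprB mulNr -subrX1 nk sub0r opprK.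
split=> //; split=> //.
rewrite -(cz (1 - n)) // mulrBl mulrBr mul1r mulr1; by [].
Qed.

Lemma inv_aux (R : pzRingType) (x y q c s : R) :
  q * q = q -> x * q = 0 -> q * x = 0 -> y * q = 0 -> q * y = 0 ->
  x * y = 1 - q -> y * x = 1 - q -> c * s = 1 -> s * c = 1 ->
  q * c = c * q -> q * s = s * q ->
  (x - q * c) * (y - q * s) = 1 /\ (y - q * s) * (x - q * c) = 1.
Proof.
move=> qq xq qx yq qy xy yx cs sc qc qs.
have e3 : forall c s, q * c = c * q -> c * s = 1 -> q * c * (q * s) = q.
  move=> c' s' qc' cs'.
  by rewrite !mulrA -(mulrA q c' q) -qc' mulrA qq -mulrA cs' mulr1.
split.
  have e1 : x * (q * s) = 0 by rewrite mulrA xq mul0r.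
  have e2 : q * c * y = 0 by rewrite qc -mulrA qy mulr0.
  by rewrite mulrBl !mulrBr xy e1 e2 (e3 c s) // subr0 sub0r opprK subrK.
have e1 : y * (q * c) = 0 by rewrite mulrA yq mul0r.
have e2 : q * s * x = 0 by rewrite qs -mulrA qx mulr0.
by rewrite mulrBl !mulrBr yx e1 e2 (e3 s c) // subr0 sub0r opprK subrK.
Qed.

Lemma idemX (R : pzRingType) (q : R) m : q * q = q -> (0 < m)%N -> q ^+ m = q.
Proof.
move=> qq; elim: m => [//|[|m] IH _]; first by rewrite expr1.
by rewrite exprS IH.
Qed.

Lemma star_1m (R : pzRingType) (star : R -> R) f :
  is_involution star -> star f = f -> star (1 - f) = 1 - f.
Proof.
case=> sD sM sK sf.
have s0 : star 0 = 0.
  by apply: (@addrI _ (star 0)); rewrite -sD !addr0.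
have s1 : star 1 = 1.
  by rewrite -(mulr1 (star 1)) -{2}(sK 1) -sM mulr1 sK.
have sN : forall x, star (- x) = - star x.
  by move=> x; apply/eqP; rewrite -subr_eq0 opprK -sD addNr s0.
by rewrite sD sN s1 sf.
Qed.

Lemma imp14 (R : pzRingType) (star : R -> R) (a : R) :
  (exists (e u : R) (m : nat),
       [/\ is_projection star e, is_unit u, (0 < m)%N, a ^+ m = e * u &
        [/\ a * e = e * a, a * u = u * a & e * u = u * e]]) ->
  (exists b : R,
       [/\ a * b = b * a, star (a * b) = a * b, b = b * a * b &
        is_nilpotent (a - a ^+ 2 * b)]).
Proof.
move=> [e [u [m [[ee se] [w [uw wu]] m0 am [ae au eu]]]]].
have comm_w : forall z, z * u = u * z -> w * z = z * w.
  move=> z zu; by rewrite -[w * z]mulr1 -uw mulrA -(mulrA w z u) zu mulrA wu mul1r.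
have aw := comm_w a au.
have ew := comm_w e eu.
have aE : a * a ^+ m.-1 = a ^+ m by rewrite -exprS prednK.
have ame : GRing.comm (a ^+ m.-1) e by apply/commr_sym/commrX.
have ab : a * (a ^+ m.-1 * w * e) = e.
  by rewrite !mulrA aE am -(mulrA e u w) uw mulr1 ee.
have ba : a ^+ m.-1 * w * e * a = e.
  transitivity (a * (a ^+ m.-1 * w * e)); last exact: ab.
  rewrite -mulrA -ae !mulrA -(mulrA _ w a) aw mulrA.
  by rewrite (commrX m.-1 (erefl (a * a))).
exists (a ^+ m.-1 * w * e); split.
- by rewrite ab ba.
- by rewrite ab se.
- by rewrite ba !mulrA -ame -(mulrA _ e w) -ew mulrA -(mulrA _ e e) ee.
exists m.
have -> : a - a ^+ 2 * (a ^+ m.-1 * w * e) = a * (1 - e).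
  by rewrite expr2 -mulrA ab mulrBr mulr1.
have c1 : GRing.comm a (1 - e) by apply: commrB; [apply: commr1|].
rewrite exprMn_comm // (@idemX _ (1 - e)) //; last by rewrite mulrBr !mulrBl !mulr1 !mul1r ee subrr subr0.
by rewrite am eu -mulrA mulrBr mulr1 ee subrr mulr0.
Qed.

Lemma imp43 (R : pzRingType) (star : R -> R) (a : R) :
  (exists b : R,
       [/\ a * b = b * a, star (a * b) = a * b, b = b * a * b &
        is_nilpotent (a - a ^+ 2 * b)]) ->
   (exists p : R,
       [/\ is_projection star p, a * p = p * a, corner_unit p (a * p) &
        is_nilpotent (a * (1 - p))]).
Proof.
move=> [b [ab sab bab nil]].
have pp : a * b * (a * b) = a * b by rewrite -mulrA (mulrA b a b) -bab.
have bp : b * (a * b) = b by rewrite mulrA -bab.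
have pb : a * b * b = b by rewrite ab -bab.
have ap : a * (a * b) = a * b * a by rewrite -mulrA ab.
exists (a * b); split => //.
- split.
    have h1 : a * b * (a * (a * b)) = a * (a * b) by rewrite ap mulrA pp.
    by rewrite h1 -mulrA pp.
  exists b; split; first by rewrite pb bp.
  split.
    by rewrite -mulrA pb.
  by rewrite mulrA -ab pp.
- by rewrite mulrBr mulr1 mulrA -expr2.
Qed.

Lemma imp32 (R : pzRingType) (star : R -> R) (a : R) :
  is_involution star ->
   (exists p : R,
       [/\ is_projection star p, a * p = p * a, corner_unit p (a * p) &
        is_nilpotent (a * (1 - p))]) ->
   (exists f v : R,
       [/\ is_projection star f, is_unit v, a = f + v, f * v = v * f &
        is_nilpotent (a * f)]).
Proof.
move=> inv [p [[pp sp] ap [xE [y [yE [xy yx]]]] [k nk]]].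
have qq : (1 - p) * (1 - p) = 1 - p.
  by rewrite mulrBr !mulrBl !mulr1 !mul1r pp subrr subr0.
have qa : GRing.comm (1 - p) a.
  exact: commr_sym (commrB (commr1 a) ap).
have qaq : GRing.comm (1 - p) (a * (1 - p)) by apply: commrM.
have [s [cs [sc scomm]]] := @geo _ _ _ nk.
have yp : y * p = y by rewrite yE -!mulrA pp.
have py : p * y = y by rewrite yE !mulrA pp.
have e1 : a * p * (1 - p) = 0 by rewrite -mulrA mulrBr mulr1 pp subrr mulr0.
have e2 : (1 - p) * (a * p) = 0 by rewrite mulrA qa -mulrA mulrBl mul1r pp subrr mulr0.
have e3 : y * (1 - p) = 0 by rewrite mulrBr mulr1 yp subrr.
have e4 : (1 - p) * y = 0 by rewrite mulrBl mul1r py subrr.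
have e5 : a * p * y = 1 - (1 - p) by rewrite xy subKr.
have e6 : y * (a * p) = 1 - (1 - p) by rewrite yx subKr.
have e7 : GRing.comm (1 - p) (1 - a * (1 - p)) by apply: commrB; [apply: commr1 | exact: qaq].
have [h1 h2] := @inv_aux R (a * p) y (1 - p) (1 - a * (1 - p)) s qq
  e1 e2 e3 e4 e5 e6 cs sc e7 (scomm _ qaq).
have vE : a - (1 - p) = a * p - (1 - p) * (1 - a * (1 - p)).
  rewrite mulrBr mulr1 mulrA qa -mulrA qq.
  rewrite [a * (1 - p)]mulrBr mulr1.
  move: (a * p) (1 - p) => t q.
  by rewrite opprB addrA (addrC t) subrK.
exists (1 - p), (a - (1 - p)); split.
- by split=> //; apply: star_1m.
- by exists (y - (1 - p) * s); rewrite vE.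
- by rewrite addrC subrK.
- by apply: commrB.
- by exists k.
Qed.

Lemma imp21 (R : pzRingType) (star : R -> R) (a : R) :
  is_involution star ->
   (exists f v : R,
       [/\ is_projection star f, is_unit v, a = f + v, f * v = v * f &
        is_nilpotent (a * f)]) ->
  (exists (e u : R) (m : nat),
       [/\ is_projection star e, is_unit u, (0 < m)%N, a ^+ m = e * u &
        [/\ a * e = e * a, a * u = u * a & e * u = u * e]]).
Proof.
move=> inv [f [v [[ff sf] [w [vw wv]] aE fv [k nk]]]].
have af : GRing.comm a f by rewrite /GRing.comm aE mulrDl mulrDr ff fv.
have av : GRing.comm a v by rewrite /GRing.comm aE mulrDl mulrDr fv.
have aq : GRing.comm a (1 - f) by apply: commrB; [apply: commr1 | exact: af].
have vq : GRing.comm v (1 - f) by apply: commrB; [apply: commr1 | exact: esym fv].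
have qq : (1 - f) * (1 - f) = 1 - f.
  by rewrite mulrBr !mulrBl !mulr1 !mul1r ff subrr subr0.
have avf : a * (1 - f) = v * (1 - f).
  by rewrite aE mulrDl mulrBr mulr1 ff subrr add0r.
exists (1 - f), (v ^+ k.+1), k.+1; split => //.
- by split=> //; apply: star_1m.
- exists (w ^+ k.+1).
  have vw' : GRing.comm v w by rewrite /GRing.comm vw wv.
  split; rewrite -exprMn_comm ?vw ?wv ?expr1n //; exact: commr_sym vw'.
- have -> : a ^+ k.+1 = a ^+ k.+1 * f + a ^+ k.+1 * (1 - f).
    by rewrite mulrBr mulr1 addrC subrK.
  have h1 : a ^+ k.+1 * f = 0.
    by rewrite -{1}(@idemX _ f k.+1) // -exprMn_comm // exprSr nk mul0r.
  rewrite h1 add0r -{1}(@idemX _ (1 - f) k.+1) // -exprMn_comm // avf.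
  rewrite exprMn_comm // (@idemX _ (1 - f) k.+1) //.
  by apply/commr_sym/commrX/commr_sym.
- split; [exact: aq | exact: commrX | exact: commrX (commr_sym vq)].
Qed.

Theorem theorem3p2 (R : pzRingType) (star : R -> R) (a : R) :
  is_involution star ->
  [<->
   (exists (e u : R) (m : nat),
       [/\ is_projection star e, is_unit u, (0 < m)%N, a ^+ m = e * u &
        [/\ a * e = e * a, a * u = u * a & e * u = u * e]]);
   (exists f v : R,
       [/\ is_projection star f, is_unit v, a = f + v, f * v = v * f &
        is_nilpotent (a * f)]);
   (exists p : R,
       [/\ is_projection star p, a * p = p * a, corner_unit p (a * p) &
        is_nilpotent (a * (1 - p))]);
   (exists b : R,
       [/\ a * b = b * a, star (a * b) = a * b, b = b * a * b &
        is_nilpotent (a - a ^+ 2 * b)])].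
Proof.
move=> inv; tfae=> h.
- exact: imp32 _ _ _ inv (imp43 _ _ _ (imp14 _ _ _ h)).
- exact: imp43 _ _ _ (imp14 _ _ _ (imp21 _ _ _ inv h)).
- exact: imp14 _ _ _ (imp21 _ _ _ inv (imp32 _ _ _ inv h)).
- exact: imp21 _ _ _ inv (imp32 _ _ _ inv (imp43 _ _ _ h)).
Qed.
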